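(* Let $k\ge2$. For all $\ell\in[n]$ with $\ell\ge k^2+k$ and all $r\in\{0,1,\dots,k\}$, $$\mathbb{E}[v(\mathrm{ALG}^{\ge\ell}_r)]\ \ge\ \left(\frac{r\ell}{(k-1)n}-\frac{1}{k-1}\left(\frac{\ell}{n}\right)^k\sum_{r'=0}^{r-1}\sum_{i=0}^{r'}\frac{(k-1)^i}{i!}\ln^i\!\left(\frac{n}{\ell}\right)-\frac{3k^2r}{(k-1)n}\right)\alpha\, v(\mathrm{OPT}).$$
   Context: Submodular secretary setting. Let $U$ be a finite ground set of $n$ items and $k\ge1$ an integer. Let $v\colon 2^U\to\mathbb{R}_{\ge0}$ be monotone and submodular, and $\mathrm{OPT}\in\arg\max\{v(S): S\subseteq U, |S|\le k\}$. The items arrive one per round (rounds $1,\dots,n$) in a uniformly random order; for $\ell\in[n]$, $U^{\le \ell}$ denotes the set of items arriving in rounds $1,\dots,\ell$. $\mathcal{A}$ is an offline algorithm that, for every $L\subseteq U$, returns a set $\mathcal{A}(L)\subseteq L$ with $|\mathcal{A}(L)|\le k$ and $v(\mathcal{A}(L))\ge \alpha\max\{v(T):T\subseteq L,|T|\le k\}$, where $\alpha\in(0,1]$; $\mathcal{A}(L)$ depends only on the set $L$. Random sets $\mathrm{ALG}^{\ge\ell}_r\subseteq U$ for $\ell\in\{1,\dots,n+1\}$, $r\in\{0,\dots,k\}$ are defined recursively: $\mathrm{ALG}^{\ge\ell}_0=\emptyset$ for all $\ell$, $\mathrm{ALG}^{\ge n+1}_r=\emptyset$ for all $r$, and for $\ell\in[n]$,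 $r\ge1$, letting $j$ be the item arriving in round $\ell$: $\mathrm{ALG}^{\ge\ell}_r=\{j\}\cup\mathrm{ALG}^{\ge\ell+1}_{r-1}$ if $j\in\mathcal{A}(U^{\le\ell})$, and $\mathrm{ALG}^{\ge\ell}_r=\mathrm{ALG}^{\ge\ell+1}_{r}$ otherwise. *)

(* Defs.v *)
From Stdlib Require Import Reals.
From mathcomp Require Import all_boot perm.
Set Implicit Arguments. Unset Strict Implicit. Unset Printing Implicit Defensive.

(* Ground set U = 'I_n.  A random order is a permutation sigma : {perm 'I_n};
   the item arriving in round t+1 (t : 'I_n) is sigma t. *)

Definition prefix (n : nat) (sigma : {perm 'I_n}) (l : nat) : {set 'I_n} :=
  [set sigma t | t in [pred t : 'I_n | (t < l)%N]].

Fixpoint alg_rec (n : nat) (A : {set 'I_n} -> {set 'I_n}) (sigma : {perm 'I_n})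
    (d l r : nat) {struct d} : {set 'I_n} :=
  match d with
  | 0 => set0
  | d'.+1 =>
    match r with
    | 0 => set0
    | r'.+1 =>
      match [pick t : 'I_n | t.+1 == l] with
      | Some t =>
          if sigma t \in A (prefix sigma l)
          then sigma t |: alg_rec A sigma d' l.+1 r'
          else alg_rec A sigma d' l.+1 r
      | None => set0
      end
    end
  end.

Definition ALG (n : nat) (A : {set 'I_n} -> {set 'I_n}) (sigma : {perm 'I_n})
    (l r : nat) : {set 'I_n} :=
  alg_rec A sigma (n.+1 - l) l r.

Local Open Scope R_scope.

Definition Eperm (n : nat) (f : {perm 'I_n} -> R) : R :=
  (\big[Rplus/0]_(s : {perm 'I_n}) f s) / INR #|{: {perm 'I_n}}|.

Definition monotone (n : nat) (v : {set 'I_n} -> R) : Prop :=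
  forall S T : {set 'I_n}, S \subset T -> v S <= v T.

Definition submodular (n : nat) (v : {set 'I_n} -> R) : Prop :=
  forall S T : {set 'I_n}, v (S :|: T) + v (S :&: T) <= v S + v T.

(* Main.v *)
Require Import Defs.
From Stdlib Require Import Reals Lra Lia Arith Factorial.
Local Open Scope R_scope.

Section An.
Variable K : R.

Fixpoint ee (L : R) (m : nat) : R :=
  match m with 0 => 1 | S m' => ee L m' + K ^ (S m') / INR (fact (S m')) * L ^ (S m') end.

Fixpoint PP (L : R) (r : nat) : R :=
  match r with 0 => 0 | S r' => PP L r' + ee L r' end.

Lemma dmult f g x a b : derivable_pt_lim f x a -> derivable_pt_lim g x b ->
  derivable_pt_lim (fun y => f y * g y) x (a * g x + f x * b).
Proof. intros; exact (derivable_pt_lim_mult f g x a b H H0). Qed.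
Lemma dplus f g x a b : derivable_pt_lim f x a -> derivable_pt_lim g x b ->
  derivable_pt_lim (fun y => f y + g y) x (a + b).
Proof. intros; exact (derivable_pt_lim_plus f g x a b H H0). Qed.
Lemma dminus f g x a b : derivable_pt_lim f x a -> derivable_pt_lim g x b ->
  derivable_pt_lim (fun y => f y - g y) x (a - b).
Proof. intros; exact (derivable_pt_lim_minus f g x a b H H0). Qed.
Lemma dcomp f g x a b : derivable_pt_lim f x a -> derivable_pt_lim g (f x) b ->
  derivable_pt_lim (fun y => g (f y)) x (b * a).
Proof. intros; exact (derivable_pt_lim_comp f g x a b H H0). Qed.
Lemma dconst c x : derivable_pt_lim (fun _ => c) x 0.
Proof. exact (derivable_pt_lim_const c x). Qed.
Lemma dext f g x a b : (forall y, f y = g y) -> a = b -> derivable_pt_lim f x a ->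
  derivable_pt_lim g x b.
Proof.
  intros Hfg Hab H eps Heps. destruct (H eps Heps) as [d Hd]. exists d.
  intros hh Hh Hhd. rewrite <- !Hfg, <- Hab. apply Hd; auto.
Qed.

Lemma fact_pos_R m : 0 < INR (fact m).
Proof. apply lt_0_INR, lt_O_fact. Qed.

Lemma d_ee m L : derivable_pt_lim (fun L => ee L m) L
   (match m with 0 => 0 | S m' => K * ee L m' end).
Proof.
  induction m as [|m IH].
  - simpl. apply dconst.
  - eapply dext; [intro; reflexivity| |].
    2:{ change (fun L => ee L (S m)) with (fun L => ee L m + K^(S m)/INR(fact (S m)) * L^(S m)).
        apply dplus. apply IH.
        apply dmult. apply dconst. apply derivable_pt_lim_pow. }
    destruct m as [|m].
    + simpl. field.
    + cbv beta.
      change (fact (S (S m))) with ((S (S m)) * fact (S m))%nat.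
      rewrite mult_INR.
      assert (H1 := fact_pos_R (S m)).
      assert (H2 : 0 < INR (S (S m))) by (apply lt_0_INR; lia).
      replace (Init.Nat.pred (S (S m))) with (S m) by reflexivity.
      change (ee L (S m)) with (ee L m + K^(S m)/INR(fact (S m)) * L^(S m)).
      simpl pow. field. lra.
Qed.

Lemma d_PP r L : derivable_pt_lim (fun L => PP L r) L (K * PP L (Nat.pred r)).
Proof.
  induction r as [|r IH].
  - simpl. eapply dext; [intro; reflexivity| |apply dconst]. ring.
  - simpl. eapply dext; [intro; reflexivity| |].
    2:{ apply dplus. apply IH. apply d_ee. }
    destruct r as [|r]; simpl; ring.
Qed.
End An.

Section Q.
Variable kk : nat.
Variable K : R.
Hypothesis kk_pos : (1 <= kk)%nat.

Definition Qf (r : nat) (x : R) : R := x ^ kk * PP K (- ln x) r.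
Definition Df (r : nat) (x : R) : R := (INR kk * Qf r x - K * Qf (Nat.pred r) x) / x.

Lemma d_Qf r x : 0 < x -> derivable_pt_lim (Qf r) x (Df r x).
Proof.
  intro Hx. unfold Qf at 1.
  eapply dext; [intro; reflexivity| |].
  2:{ apply dmult. apply derivable_pt_lim_pow.
      apply (dcomp (fun y => - ln y) (fun L => PP K L r)). apply (derivable_pt_lim_opp ln). apply derivable_pt_lim_ln. exact Hx.
      apply d_PP. }
  unfold Df, Qf. destruct kk as [|k']; [lia|].
  replace (Init.Nat.pred (S k')) with k' by reflexivity.
  simpl pow. field. lra.
Qed.

Hypothesis HK : K = INR kk - 1.

Lemma d_Df r x : 0 < x -> derivable_pt_lim (Df r) x (K * (Df r x - Df (Nat.pred r) x) / x).
Proof.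
  intro Hx. unfold Df at 1.
  eapply dext; [intro; reflexivity| |].
  2:{ apply (derivable_pt_lim_div (fun y => INR kk * Qf r y - K * Qf (Nat.pred r) y) Datatypes.id).
      apply dminus. apply dmult. apply dconst. apply d_Qf; auto.
      apply dmult. apply dconst. apply d_Qf; auto.
      apply derivable_pt_lim_id. unfold Datatypes.id; lra. }
  unfold Df, Datatypes.id. rewrite HK. unfold Rsqr. field. lra.
Qed.
End Q.

Lemma ee_sum K L m : ee K L m = sum_f_R0 (fun i => / INR (fact i) * (K * L) ^ i) m.
Proof.
  induction m as [|m IH]; simpl ee; simpl sum_f_R0.
  - simpl. field.
  - rewrite IH. rewrite Rpow_mult_distr. unfold Rdiv. ring.
Qed.

Lemma ee_le_exp K L m : 0 <= K -> 0 <= L -> ee K L m <= exp (K * L).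
Proof.
  intros HK HL. rewrite ee_sum.
  apply growing_ineq.
  - intro n. rewrite tech5. pose proof (fact_pos_R (S n)).
    assert (0 <= / INR (fact (S n)) * (K * L) ^ S n).
    { apply Rmult_le_pos. left; apply Rinv_0_lt_compat; lra.
      apply pow_le, Rmult_le_pos; auto. }
    lra.
  - unfold exp. destruct (exist_exp (K * L)) as [l Hl]. simpl. exact Hl.
Qed.

Lemma ee_ge0 K L m : 0 <= K -> 0 <= L -> 0 <= ee K L m.
Proof.
  intros HK HL. induction m as [|m IH]. simpl; lra.
  change (ee K L (S m)) with (ee K L m + K ^ (S m) / INR (fact (S m)) * L ^ (S m)).
  pose proof (fact_pos_R (S m)).
  assert (0 <= K ^ S m / INR (fact (S m)) * L ^ S m).
  { apply Rmult_le_pos. apply Rmult_le_pos. apply pow_le; auto.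
    left; apply Rinv_0_lt_compat; lra. apply pow_le; auto. }
  lra.
Qed.

Lemma PP_bounds K L r : 0 <= K -> 0 <= L -> 0 <= PP K L r <= INR r * exp (K * L).
Proof.
  intros HK HL. induction r as [|r IH]; simpl PP.
  - simpl. lra.
  - rewrite S_INR. pose proof (ee_ge0 K L r HK HL). pose proof (ee_le_exp K L r HK HL). lra.
Qed.

Section QB.
Variable kk : nat.
Variable K : R.
Hypothesis kk_pos : (1 <= kk)%nat.
Hypothesis HK : K = INR kk - 1.

Lemma Qf_bounds r x : 0 < x <= 1 -> 0 <= Qf kk K r x <= INR r * x.
Proof.
  intros Hx. unfold Qf.
  assert (HL : 0 <= - ln x).
  { destruct (Req_dec x 1) as [->|Hne]. rewrite ln_1; lra.
    assert (ln x < 0). { rewrite <- ln_1. apply ln_increasing; lra. } lra. }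
  assert (HK0 : 0 <= K). { rewrite HK. destruct kk as [|k']; [lia|]. rewrite S_INR. pose proof (pos_INR k'). lra. }
  destruct (PP_bounds K (- ln x) r HK0 HL) as [P0 P1].
  destruct kk as [|k']; [lia|].
  assert (HKk : K = INR k') by (rewrite HK, S_INR; ring).
  assert (Hxk : 0 < x ^ k') by (apply pow_lt; lra).
  assert (E : x ^ S k' * exp (K * - ln x) = x).
  { rewrite HKk. replace (INR k' * - ln x) with (- (INR k' * ln x)) by ring.
    rewrite <- ln_pow by lra. rewrite exp_Ropp, exp_ln by auto. simpl. field. lra. }
  split.
  - apply Rmult_le_pos; auto. apply pow_le; lra.
  - apply Rle_trans with (x ^ S k' * (INR r * exp (K * - ln x))).
    apply Rmult_le_compat_l; auto. apply pow_le; lra.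
    right. rewrite <- Rmult_assoc, (Rmult_comm (x ^ S k')), Rmult_assoc, E. reflexivity.
Qed.

Lemma Df_bound r x : 0 < x <= 1 -> Rabs (Df kk K r x) <= (INR kk + K) * INR r.
Proof.
  intros Hx. unfold Df.
  destruct (Qf_bounds r x Hx) as [A0 A1].
  destruct (Qf_bounds (Nat.pred r) x Hx) as [B0 B1].
  assert (HK0 : 0 <= K). { rewrite HK. destruct kk as [|k']; [lia|]. rewrite S_INR. pose proof (pos_INR k'). lra. }
  assert (Hpr : INR (Nat.pred r) <= INR r) by (apply le_INR; lia).
  assert (Hk0 : 0 <= INR kk) by apply pos_INR.
  assert (Hr0 : 0 <= INR r) by apply pos_INR.
  assert (B2 : Qf kk K (Nat.pred r) x <= INR r * x).
  { eapply Rle_trans. apply B1. apply Rmult_le_compat_r; lra. }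
  unfold Rdiv. rewrite Rabs_mult, Rabs_inv, (Rabs_right x) by lra.
  apply (Rmult_le_reg_r x); [lra|]. rewrite Rmult_assoc, Rinv_l, Rmult_1_r by lra.
  apply Rabs_le. split; nra.
Qed.
End QB.

Lemma abs_le_inv a b : Rabs a <= b -> - b <= a <= b.
Proof. unfold Rabs; destruct (Rcase_abs a); lra. Qed.

Section Step.
Variable kk : nat.
Variable K h : R.
Hypothesis kk2 : (2 <= kk)%nat.
Hypothesis HK : K = INR kk - 1.
Hypothesis Hh : 0 < h.

Definition Gf (r : nat) (x : R) : R :=
  INR r * x / K - 1 / K * Qf kk K r x - 3 * INR kk ^ 2 * INR r * h / K.

Lemma poly_ineq (k r : R) : 2 <= k -> 1 <= r <= k ->
  (2 * k - 1) * (2 * k - 1) * r <= (3 * k ^ 2 - 1) * (r + k - 1).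
Proof.
  intros. destruct (Rle_dec 0 (- k^2 + 4 * k - 2)).
  - nra.
  - assert ((- k^2 + 4 * k - 2) * r >= (- k^2 + 4 * k - 2) * k) by nra. nra.
Qed.

Lemma step_ineq r x : (S r <= kk)%nat -> 0 < x -> x + h <= 1 ->
  Gf (S r) x <= h + (1 - INR kk * h / x) * Gf (S r) (x + h) + (K * h / x) * Gf r (x + h).
Proof.
  intros Hr Hx Hxh.
  assert (kk1 : (1 <= kk)%nat) by lia.
  assert (Hkk : 2 <= INR kk) by (apply (le_INR 2); lia).
  assert (HK1 : 1 <= K) by lra.
  set (y := x + h).
  assert (Hxy : x < y) by (unfold y; lra).
  destruct (MVT_cor2 (Qf kk K (S r)) (Df kk K (S r)) x y Hxy) as [eta [Heta Heta2]].
  { intros c Hc. apply d_Qf; auto; lra. }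
  destruct (MVT_cor2 (Df kk K (S r)) (fun z => K * (Df kk K (S r) z - Df kk K (Nat.pred (S r)) z) / z) eta y) as [zeta [Hz Hz2]].
  lra.
  { intros c Hc. apply d_Df; auto; lra. }
  set (Qx := Qf kk K (S r) x) in *.
  set (Qy := Qf kk K (S r) y) in *.
  set (Qy1 := Qf kk K r y).
  set (Dy := Df kk K (S r) y) in *.
  set (Deta := Df kk K (S r) eta) in *.
  set (Dp := K * (Df kk K (S r) zeta - Df kk K (Nat.pred (S r)) zeta) / zeta) in *.
  assert (HDy : y * Dy = INR kk * Qy - K * Qy1).
  { unfold Dy, Df, Qy, Qy1. simpl Nat.pred. field. lra. }
  assert (HDyb : Rabs Dy <= (INR kk + K) * INR (S r)).
  { apply (Df_bound kk K kk1 HK); unfold y; lra. }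
  assert (HDp : Rabs Dp <= 2 * K * (INR kk + K) * INR (S r) / x).
  { unfold Dp. simpl Nat.pred.
    pose proof (Df_bound kk K kk1 HK (S r) zeta ltac:(unfold y in *; lra)) as B1.
    pose proof (Df_bound kk K kk1 HK r zeta ltac:(unfold y in *; lra)) as B2.
    assert (INR r <= INR (S r)) by (rewrite S_INR; lra).
    assert (0 <= INR kk + K) by lra.
    assert (B3 : Rabs (Df kk K (S r) zeta - Df kk K r zeta) <= 2 * (INR kk + K) * INR (S r)).
    { unfold Rminus. eapply Rle_trans. apply Rabs_triang. rewrite Rabs_Ropp. nra. }
    unfold Rdiv. rewrite !Rabs_mult, Rabs_inv, (Rabs_right zeta), (Rabs_right K) by lra.
    apply Rle_trans with (K * (2 * (INR kk + K) * INR (S r)) * / zeta).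
    { apply Rmult_le_compat_r. left; apply Rinv_0_lt_compat; lra.
      apply Rmult_le_compat_l; lra. }
    assert (0 <= INR (S r)) by apply pos_INR.
    assert (0 <= K * (2 * (INR kk + K) * INR (S r))) by (apply Rmult_le_pos; [lra|]; apply Rmult_le_pos; [lra|]; auto).
    apply Rle_trans with (K * (2 * (INR kk + K) * INR (S r)) * / x).
    { apply Rmult_le_compat_l; auto. apply Rinv_le_contravar; lra. }
    right; field; lra. }
  set (M := 2 * K * (INR kk + K) * INR (S r)) in *.
  assert (HM : 0 <= M).
  { unfold M. assert (0 <= INR (S r)) by apply pos_INR.
    apply Rmult_le_pos; [|auto]. apply Rmult_le_pos; lra. }
  set (E1 := Qy - Qx - h * Dy).
  assert (HE1 : E1 = - h * (y - eta) * Dp).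
  { unfold E1. replace (y - x) with h in Heta by (unfold y; ring).
    replace Qy with (Qx + Deta * h) by lra. replace Dy with (Deta + Dp * (y - eta)) by lra. ring. }
  assert (HxE1 : x * E1 <= h ^ 2 * M).
  { rewrite HE1. assert (Hn : - Dp <= M / x) by (destruct (abs_le_inv _ _ HDp); lra).
    assert (0 <= y - eta <= h) by (unfold y in *; lra).
    apply Rle_trans with (x * h * (y - eta) * (M / x)).
    { replace (x * (- h * (y - eta) * Dp)) with (x * h * (y - eta) * (- Dp)) by ring.
      apply Rmult_le_compat_l; auto. apply Rmult_le_pos; [|lra]. apply Rmult_le_pos; lra. }
    replace (x * h * (y - eta) * (M / x)) with (h * (y - eta) * M) by (field; lra).
    replace (h ^ 2 * M) with (h * h * M) by ring.
    apply Rmult_le_compat_r; auto. apply Rmult_le_compat_l; lra. }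
  assert (HQx : Qx = Qy - h * Dy - E1) by (unfold E1; ring).
  assert (HQy1 : Qy1 = (INR kk * Qy - y * Dy) / K) by (rewrite HDy; field; lra).
  assert (Hid : h + (1 - INR kk * h / x) * Gf (S r) y + (K * h / x) * Gf r y - Gf (S r) x
     = / (K * x) * ((3 * INR kk ^ 2 - 1) * (INR (S r) + INR kk - 1) * h ^ 2 - x * E1 + h ^ 2 * Dy)).
  { unfold Gf. fold Qx Qy Qy1. rewrite HQx, HQy1. rewrite S_INR. unfold y. assert (Ek : INR kk = K + 1) by lra. rewrite Ek. field. lra. }
  assert (HDy2 : - ((INR kk + K) * INR (S r)) <= Dy) by (destruct (abs_le_inv _ _ HDyb); lra).
  assert (HP := poly_ineq (INR kk) (INR (S r)) Hkk).
  assert (1 <= INR (S r) <= INR kk).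
  { split. rewrite S_INR; pose proof (pos_INR r); lra. apply le_INR; lia. }
  specialize (HP H).
  assert (0 <= (3 * INR kk ^ 2 - 1) * (INR (S r) + INR kk - 1) * h ^ 2 - x * E1 + h ^ 2 * Dy).
  { assert (M + (INR kk + K) * INR (S r) = (2 * INR kk - 1) * (2 * INR kk - 1) * INR (S r)) by (unfold M; rewrite HK; ring).
    assert (0 <= h ^ 2) by (apply pow_le; lra).
    assert (h ^ 2 * ((2 * INR kk - 1) * (2 * INR kk - 1) * INR (S r)) <= h^2 * ((3 * INR kk ^ 2 - 1) * (INR (S r) + INR kk - 1))) by (apply Rmult_le_compat_l; auto).
    nra. }
  assert (0 <= / (K * x) * ((3 * INR kk ^ 2 - 1) * (INR (S r) + INR kk - 1) * h ^ 2 - x * E1 + h ^ 2 * Dy)).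
  { apply Rmult_le_pos; auto. left; apply Rinv_0_lt_compat. nra. }
  lra.
Qed.
End Step.

From HB Require Import structures.
From mathcomp Require Import all_boot perm fingroup zify.
Require Import Defs.
Set Implicit Arguments. Unset Strict Implicit. Unset Printing Implicit Defensive.
Local Open Scope R_scope.

Lemma Rplus_assoc' : associative Rplus.
Proof. move=> a b c; ring. Qed.
Lemma Rplus_comm' : commutative Rplus.
Proof. move=> a b; ring. Qed.
Lemma Rplus_0_l' : left_id 0 Rplus.
Proof. move=> a; ring. Qed.
HB.instance Definition _ := Monoid.isComLaw.Build R 0 Rplus Rplus_assoc' Rplus_comm' Rplus_0_l'.

Section Sums.
Variable I : finType.

Lemma Rsum_le (P : pred I) (F G : I -> R) :
  (forall i, P i -> F i <= G i) ->
  \big[Rplus/0]_(i | P i) F i <= \big[Rplus/0]_(i | P i) G i.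
Proof.
  move=> H. apply: (big_ind2 (fun a b => a <= b)) => //.
  - lra.
  - move=> *; lra.
Qed.

Lemma Rsum_distr (P : pred I) (F : I -> R) c :
  \big[Rplus/0]_(i | P i) (c * F i) = c * \big[Rplus/0]_(i | P i) F i.
Proof.
  apply: (big_rec2 (fun a b => a = c * b)); first by ring.
  by move=> i a b _ ->; ring.
Qed.

Lemma Rsum_const (P : pred I) c :
  \big[Rplus/0]_(i | P i) c = INR #|P| * c.
Proof.
  rewrite big_const. elim: #|P| => [|m IH]; first by rewrite /=; ring.
  rewrite iterS IH S_INR; ring.
Qed.

Lemma Rsum_split (P : pred I) (F G : I -> R) :
  \big[Rplus/0]_(i | P i) (F i + G i) = \big[Rplus/0]_(i | P i) F i + \big[Rplus/0]_(i | P i) G i.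
Proof. exact: big_split. Qed.
End Sums.

Section Alg.
Close Scope R_scope.
Variable n : nat.
Variable A : {set 'I_n} -> {set 'I_n}.

Lemma ALG_end (s : {perm 'I_n}) r : ALG A s n.+1 r = set0.
Proof. by rewrite /ALG subnn. Qed.

Lemma ALG_r0 (s : {perm 'I_n}) l : ALG A s l 0 = set0.
Proof. by rewrite /ALG; case: (n.+1 - l). Qed.

Lemma ALG_unfold (s : {perm 'I_n}) (u : 'I_n) r :
  ALG A s u.+1 r.+1 =
  if s u \in A (prefix s u.+1) then s u |: ALG A s u.+2 r else ALG A s u.+2 r.+1.
Proof.
  rewrite /ALG.
  have -> : (n.+1 - u.+1 = (n - u.+1).+1)%N.
  { have := ltn_ord u. lia. }
  have -> : (n.+1 - u.+2 = n - u.+1)%N by lia.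
  rewrite /=.
  case: pickP => [t /eqP Ht | H].
  - have -> : t = u by apply: val_inj; case: Ht.
    done.
  - by move: (H u); rewrite eqxx.
Qed.

Lemma alg_ext (s s' : {perm 'I_n}) l :
  (forall p : 'I_n, (l <= p)%N -> s p = s' p) ->
  (forall m, (l <= m)%N -> prefix s m = prefix s' m) ->
  forall d m r, (l < m)%N -> alg_rec A s d m r = alg_rec A s' d m r.
Proof.
  move=> Hp Hm. elim=> [|d IH] m r Hlm //=.
  case: r => [|r] //.
  case: pickP => [t /eqP Ht | H] //.
  rewrite Hp; last by lia.
  rewrite Hm; last by lia.
  rewrite !IH //; lia.
Qed.

Lemma prefix_tperm (s : {perm 'I_n}) (t u : 'I_n) m :
  (t < m)%N -> (u < m)%N -> prefix (tperm t u * s)%g m = prefix s m.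
Proof.
  move=> Ht Hu. apply/setP => x. rewrite /prefix.
  apply/imsetP/imsetP => [[p Pp ->]|[p Pp ->]].
  - exists (tperm t u p); last by rewrite permM.
    move: Pp; rewrite !inE; case: tpermP => // _ _.
  - exists (tperm t u p); last by rewrite permM tpermK.
    move: Pp; rewrite !inE; case: tpermP => // _ _.
Qed.

Lemma ALG_swap (s : {perm 'I_n}) (t u : 'I_n) l r :
  (t < l)%N -> (u < l)%N -> ALG A (tperm t u * s)%g l.+1 r = ALG A s l.+1 r.
Proof.
  move=> Ht Hu. rewrite /ALG. apply: (@alg_ext _ _ l) => //.
  - move=> p Hp. rewrite permM tpermD //; apply/eqP => E; subst; lia.
  - move=> m Hm. apply: prefix_tperm; lia.
Qed.

Lemma ALG_mono (s : {perm 'I_n}) l r : ALG A s l r \subset ALG A s l r.+1.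
Proof.
  rewrite /ALG. move: (n.+1 - l)%N => d. elim: d l r => [|d IH] l r //=.
  case: r => [|r]; first by rewrite sub0set.
  case: pickP => [t _ | _] //.
  case: ifP => _ //. by rewrite setUS.
Qed.
End Alg.

Section SetF.
Variable n : nat.
Variable v : {set 'I_n} -> R.
Hypothesis v_nonneg : forall S, 0 <= v S.
Hypothesis v_mono : monotone v.
Hypothesis v_sub : submodular v.

Lemma subm_sum (B' : {set 'I_n}) m : forall X : {set 'I_n}, #|X| = m ->
  \big[Rplus/0]_(j in X) v (j |: B') + v B' >= v (X :|: B') + INR #|X| * v B'.
Proof.
  elim: m => [|m IH] X HX.
  - move/eqP: HX; rewrite cards_eq0 => /eqP ->.
    rewrite big_set0 set0U cards0 /=. lra.
  - have : (0 < #|X|)%N by rewrite HX.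
    case/card_gt0P => e He.
    rewrite (big_setD1 e He) /=.
    have HX0 : #|X :\ e| = m by rewrite (cardsD1 e X) He in HX; case: HX.
    have HI := IH _ HX0.
    have Hsub := v_sub (X :\ e :|: B') (e |: B').
    have EU : (X :\ e :|: B') :|: (e |: B') = X :|: B'.
    { apply/setP => x; rewrite !inE. case: (x =P e) => [->|_]; rewrite ?He ?orbT //=.
      by rewrite -orbA orbb. }
    have Hm : v B' <= v ((X :\ e :|: B') :&: (e |: B')).
    { apply: v_mono. apply/subsetP => x Hx. by rewrite !inE Hx !orbT. }
    rewrite EU in Hsub.
    rewrite HX S_INR. rewrite HX0 in HI. set SS := \big[Rplus/0]_(i in X :\ e) _ in HI *. set w := v ((X :\ e :|: B') :&: (e |: B')) in Hm Hsub. clearbody SS w. lra.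
Qed.

Lemma key_ineq (X B' B : {set 'I_n}) (k l : nat) :
  B' \subset B -> (#|X| <= k)%N -> (k <= l)%N ->
  \big[Rplus/0]_(j in X) v (j |: B') + (INR l - INR #|X|) * v B >=
  v X + (INR l - INR k) * v B + (INR k - 1) * v B'.
Proof.
  move=> HB HX Hkl.
  have H1 := subm_sum B' (erefl #|X|).
  have H2 : v X <= v (X :|: B') by apply: v_mono; apply: subsetUl.
  have H3 : v B' <= v B by apply: v_mono.
  have H4 : INR #|X| <= INR k by apply: le_INR; apply/leP.
  have H5 : 0 <= v B' := v_nonneg B'.
  nra.
Qed.
End SetF.

Lemma card_lt (n l : nat) : (l <= n)%N -> #|[pred t : 'I_n | (t < l)%N]| = l.
Proof.
  elim: l => [|l IH] Hl.
  - apply: eq_card0 => t. by rewrite !inE ltn0.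
  - have Hln : (l < n)%N by [].
    rewrite (@eq_card _ _ [predU1 Ordinal Hln & [pred t : 'I_n | (t < l)%N]]).
    + rewrite cardU1 IH; last by apply: ltnW.
      by rewrite inE /= ltnn.
    + move=> t. rewrite !inE /= ltnS leq_eqVlt. congr (_ || _).
Qed.

Section Avg.
Variable n : nat.
Variable A : {set 'I_n} -> {set 'I_n}.
Variable v : {set 'I_n} -> R.
Hypothesis A_sub : forall L, A L \subset L.

Lemma sum_mulg (g : {perm 'I_n} -> R) (tau : {perm 'I_n}) :
  \big[Rplus/0]_(s : {perm 'I_n}) g s = \big[Rplus/0]_(s : {perm 'I_n}) g (tau * s)%g.
Proof. exact: (reindex_inj (mulgI tau)). Qed.

Lemma sum_avg (u : 'I_n) (g : {perm 'I_n} -> R) :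
  INR u.+1 * \big[Rplus/0]_(s : {perm 'I_n}) g s =
  \big[Rplus/0]_(s : {perm 'I_n}) \big[Rplus/0]_(t : 'I_n | (t < u.+1)%N) g (tperm t u * s)%g.
Proof.
  rewrite exchange_big.
  rewrite (eq_bigr (fun _ => \big[Rplus/0]_(s : {perm 'I_n}) g s)); last first.
  { move=> t _. by rewrite -sum_mulg. }
  by rewrite Rsum_const card_lt.
Qed.

Lemma sum_fixed (u : 'I_n) (s : {perm 'I_n}) r :
  \big[Rplus/0]_(t : 'I_n | (t < u.+1)%N) v (ALG A (tperm t u * s)%g u.+1 r.+1) =
  \big[Rplus/0]_(j in A (prefix s u.+1)) v (j |: ALG A s u.+2 r) +
  (INR u.+1 - INR #|A (prefix s u.+1)|) * v (ALG A s u.+2 r.+1).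
Proof.
  set S := prefix s u.+1. set X := A S.
  set h := fun j => if j \in X then v (j |: ALG A s u.+2 r) else v (ALG A s u.+2 r.+1).
  rewrite [LHS](eq_bigr (fun t => h (s t))); last first.
  { move=> t Ht. rewrite ALG_unfold permM tpermR prefix_tperm //.
    rewrite !ALG_swap //. rewrite /h -/S -/X. by case: ifP. }
  have -> : \big[Rplus/0]_(t : 'I_n | (t < u.+1)%N) h (s t) = \big[Rplus/0]_(j in S) h j.
  { rewrite /S /prefix big_imset /=; last by move=> x y _ _; apply: perm_inj.
    by apply: eq_bigl. }
  rewrite (bigID (fun j => j \in X)).
  have -> : \big[Rplus/0]_(i in S | i \in X) h i = \big[Rplus/0]_(j in X) v (j |: ALG A s u.+2 r).
  { rewrite (eq_bigl (fun j => j \in X)); last first.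
    { move=> j /=. apply/andP/idP => [[]//|Hj]. split=> //. by apply: (subsetP (A_sub S)). }
    apply: eq_bigr => j Hj. by rewrite /h Hj. }
  congr (_ + _).
  rewrite (eq_bigr (fun _ => v (ALG A s u.+2 r.+1))); last first.
  { move=> j /andP [_ Hj]. by rewrite /h (negbTE Hj). }
  rewrite Rsum_const. congr (_ * _).
  have HS : #|S| = u.+1.
  { rewrite /S /prefix card_imset; last by apply: perm_inj.
    by rewrite card_lt //; apply: ltn_ord. }
  have := cardID X S. rewrite HS.
  have -> : #|[predI S & X]| = #|X|.
  { apply: eq_card => j. rewrite !inE. apply/andP/idP => [[]//|Hj]. split=> //. by apply: (subsetP (A_sub S)). }
  move=> <-. rewrite plus_INR.
  have -> : #|[pred i | (i \in S) && (i \notin X)]| = #|[predD S & X]|.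
  { apply: eq_card => j. by rewrite !inE andbC. }
  ring.
Qed.
End Avg.

Section Sample.
Variable n : nat.
Variable v : {set 'I_n} -> R.
Hypothesis v_nonneg : forall S, 0 <= v S.
Hypothesis v_mono : monotone v.
Hypothesis v_sub : submodular v.

Definition ind (b : bool) : R := if b then 1 else 0.

Lemma count_sym (l : nat) (e e' : 'I_n) :
  \big[Rplus/0]_(s : {perm 'I_n}) ind (e \in prefix s l) =
  \big[Rplus/0]_(s : {perm 'I_n}) ind (e' \in prefix s l).
Proof.
  rewrite [RHS](reindex_inj (mulIg (tperm e e'))).
  apply: eq_bigr => s _. congr ind.
  have -> : prefix (s * tperm e e')%g l = [set tperm e e' x | x in prefix s l].
  { rewrite /prefix -imset_comp. apply: eq_imset => t. by rewrite /= permM. }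
  by rewrite -{1}(tpermL e e') mem_imset //; apply: perm_inj.
Qed.

Lemma card_prefix (s : {perm 'I_n}) l : (l <= n)%N -> #|prefix s l| = l.
Proof. move=> Hl. rewrite /prefix card_imset; last by apply: perm_inj. by rewrite card_lt. Qed.

Lemma count_val (l : nat) (e : 'I_n) : (l <= n)%N ->
  INR n * \big[Rplus/0]_(s : {perm 'I_n}) ind (e \in prefix s l) =
  INR #|{perm 'I_n}| * INR l.
Proof.
  move=> Hl.
  have E1 : \big[Rplus/0]_(e' : 'I_n) \big[Rplus/0]_(s : {perm 'I_n}) ind (e' \in prefix s l) =
            INR n * \big[Rplus/0]_(s : {perm 'I_n}) ind (e \in prefix s l).
  { rewrite (eq_bigr (fun _ => \big[Rplus/0]_(s : {perm 'I_n}) ind (e \in prefix s l))); last first.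
    { move=> e' _. by apply: count_sym. }
    by rewrite Rsum_const card_ord. }
  rewrite -E1 exchange_big.
  rewrite (eq_bigr (fun _ => INR l)); last first.
  { move=> s _. rewrite -big_mkcond. 
    rewrite (eq_bigr (fun _ => 1)) //. by rewrite Rsum_const card_prefix // Rmult_1_r. }
  by rewrite Rsum_const.
Qed.

Lemma sample (Sf : {perm 'I_n} -> {set 'I_n}) c :
  (forall e, \big[Rplus/0]_(s : {perm 'I_n}) ind (e \in Sf s) = c) ->
  forall m (T : {set 'I_n}), #|T| = m ->
  \big[Rplus/0]_(s : {perm 'I_n}) v (T :&: Sf s) >=
  \big[Rplus/0]_(s : {perm 'I_n}) v set0 + c * (v T - v set0).
Proof.
  move=> Hc. elim=> [|m IH] T HT.
  - move/eqP: HT; rewrite cards_eq0 => /eqP ->.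
    rewrite (eq_bigr (fun _ => v set0)); last by move=> s _; rewrite set0I.
    set X := \big[Rplus/0]_(s : {perm 'I_n}) v set0. clearbody X. lra.
  - have : (0 < #|T|)%N by rewrite HT.
    case/card_gt0P => e He.
    have HT0 : #|T :\ e| = m by rewrite (cardsD1 e T) He in HT; case: HT.
    have HI := IH _ HT0.
    have Hpt : forall s, v ((T :\ e) :&: Sf s) + ind (e \in Sf s) * (v T - v (T :\ e)) <= v (T :&: Sf s).
    { move=> s. rewrite /ind. case: ifP => He2.
      - have Hs := v_sub (e |: ((T :\ e) :&: Sf s)) (T :\ e).
        have E1 : e |: ((T :\ e) :&: Sf s) :|: T :\ e = T.
        { apply/setP => x; rewrite !inE. case: (x =P e) => [->|_]; rewrite ?He ?He2 //=.
          by case: (x \in T); case: (x \in Sf s). }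
        have E2 : (e |: ((T :\ e) :&: Sf s)) :&: (T :\ e) = (T :\ e) :&: Sf s.
        { apply/setP => x; rewrite !inE. case: (x =P e) => [->|_]; rewrite ?He ?He2 //=.
          by case: (x \in T); case: (x \in Sf s). }
        have E3 : e |: ((T :\ e) :&: Sf s) = T :&: Sf s.
        { apply/setP => x; rewrite !inE. case: (x =P e) => [->|_]; rewrite ?He ?He2 //=. }
        rewrite E1 E2 E3 in Hs. lra.
      - have -> : T :&: Sf s = (T :\ e) :&: Sf s.
        { apply/setP => x; rewrite !inE. case: (x =P e) => [->|_]; rewrite ?He ?He2 //=. }
        lra. }
    have HS := @Rsum_le _ predT _ _ (fun s _ => Hpt s).
    rewrite Rsum_split in HS.
    have E : \big[Rplus/0]_(s | predT s) (ind (e \in Sf s) * (v T - v (T :\ e))) = c * (v T - v (T :\ e)).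
    { rewrite (eq_bigr (fun s => (v T - v (T :\ e)) * ind (e \in Sf s))); last by move=> s _; ring.
      rewrite Rsum_distr. have := Hc e. rewrite /= => ->. ring. }
    rewrite E in HS.
    set X1 := \big[Rplus/0]_(s : {perm 'I_n}) v (T :&: Sf s) in HS *.
    set X2 := \big[Rplus/0]_(s : {perm 'I_n}) v ((T :\ e) :&: Sf s) in HS HI.
    set X3 := \big[Rplus/0]_(s : {perm 'I_n}) v set0 in HI *.
    clearbody X1 X2 X3. lra.
Qed.
End Sample.

Section Rec.
Variables (n k : nat) (v : {set 'I_n} -> R) (A : {set 'I_n} -> {set 'I_n}) (alpha : R) (OPT : {set 'I_n}).
Hypothesis v_nonneg : forall S, 0 <= v S.
Hypothesis v_mono : monotone v.
Hypothesis v_sub : submodular v.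
Hypothesis OPT_card : (#|OPT| <= k)%N.
Hypothesis alpha_pos : 0 < alpha.
Hypothesis A_sub : forall L, A L \subset L.
Hypothesis A_card : forall L, (#|A L| <= k)%N.
Hypothesis A_approx : forall L T : {set 'I_n}, T \subset L -> (#|T| <= k)%N ->
                alpha * v T <= v (A L).

Definition aa l r := Eperm (fun s => v (ALG A s l r)).

Lemma NN_pos : 0 < INR #|{perm 'I_n}|.
Proof. apply: lt_0_INR. apply/ltP. apply/card_gt0P. by exists 1%g. Qed.

Lemma aa_ge0 l r : 0 <= aa l r.
Proof.
  rewrite /aa /Eperm. apply: Rmult_le_pos; last first.
  { left; apply: Rinv_0_lt_compat; exact: NN_pos. }
  have := @Rsum_le _ predT (fun _ => 0) (fun s => v (ALG A s l r)) (fun s _ => v_nonneg _).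
  rewrite Rsum_const Rmult_0_r. done.
Qed.

Lemma opt_bound l : (l <= n)%N -> (0 < n)%N ->
  \big[Rplus/0]_(s : {perm 'I_n}) v (OPT :&: prefix s l) >=
  INR #|{perm 'I_n}| * INR l / INR n * v OPT.
Proof.
  move=> Hl Hn.
  have Hn' : 0 < INR n by apply: lt_0_INR; apply/ltP.
  set c := INR #|{perm 'I_n}| * INR l / INR n.
  have Hc : forall e, \big[Rplus/0]_(s : {perm 'I_n}) ind (e \in prefix s l) = c.
  { move=> e. have := count_val e Hl.
    set Y := \big[Rplus/0]_(s : {perm 'I_n}) ind (e \in prefix s l). clearbody Y.
    rewrite /c => <-. field. lra. }
  have := sample v_sub Hc (erefl #|OPT|).
  rewrite Rsum_const.
  have HNN := NN_pos.
  have Hl' : INR l <= INR n by apply: le_INR; apply/leP.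
  have Hc1 : c <= INR #|{perm 'I_n}|.
  { rewrite /c. apply: (Rmult_le_reg_r (INR n)) => //.
    field_simplify; [|lra]. nra. }
  have Hc0 : 0 <= c.
  { rewrite /c. apply: Rmult_le_pos. apply: Rmult_le_pos; [lra|apply: pos_INR].
    left; apply: Rinv_0_lt_compat; lra. }
  have H0 := v_nonneg set0.
  move=> H. have E : INR #|(xpredT : {pred {perm 'I_n}})| = INR #|{perm 'I_n}| by []. rewrite E in H. move: H.
  set X := \big[Rplus/0]_(s : {perm 'I_n}) v (OPT :&: prefix s l). clearbody X.
  nra.
Qed.

Lemma Eperm_sum (f : {perm 'I_n} -> R) :
  Eperm f = \big[Rplus/0]_(s : {perm 'I_n}) f s / INR #|{perm 'I_n}|.
Proof. by []. Qed.

Lemma recur (u : 'I_n) r : (k <= u.+1)%N ->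
  aa u.+1 r.+1 >= / INR u.+1 * (alpha * (INR u.+1 / INR n) * v OPT +
     (INR u.+1 - INR k) * aa u.+2 r.+1 + (INR k - 1) * aa u.+2 r).
Proof.
  move=> Hku.
  have Hn : (0 < n)%N by apply: (leq_ltn_trans _ (ltn_ord u)).
  have Hun : (u.+1 <= n)%N by apply: ltn_ord.
  set l := u.+1.
  have Hl0 : 0 < INR l by apply: lt_0_INR; lia.
  have HNN := NN_pos.
  have Hn' : 0 < INR n by apply: lt_0_INR; apply/ltP.
  set S1 := \big[Rplus/0]_(s : {perm 'I_n}) v (ALG A s l r.+1).
  set S2 := \big[Rplus/0]_(s : {perm 'I_n}) v (ALG A s u.+2 r.+1).
  set S3 := \big[Rplus/0]_(s : {perm 'I_n}) v (ALG A s u.+2 r).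
  set SO := \big[Rplus/0]_(s : {perm 'I_n}) v (OPT :&: prefix s l).
  have Hmain : INR l * S1 >= alpha * SO + (INR l - INR k) * S2 + (INR k - 1) * S3.
  { rewrite /S1 (sum_avg u (fun s => v (ALG A s l r.+1))).
    rewrite (eq_bigr (fun s =>
      \big[Rplus/0]_(j in A (prefix s l)) v (j |: ALG A s u.+2 r) +
      (INR l - INR #|A (prefix s l)|) * v (ALG A s u.+2 r.+1))); last first.
    { move=> s _. exact: sum_fixed. }
    have H1 : forall s : {perm 'I_n},
      alpha * v (OPT :&: prefix s l) + (INR l - INR k) * v (ALG A s u.+2 r.+1) + (INR k - 1) * v (ALG A s u.+2 r) <=
      \big[Rplus/0]_(j in A (prefix s l)) v (j |: ALG A s u.+2 r) +
      (INR l - INR #|A (prefix s l)|) * v (ALG A s u.+2 r.+1).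
    { move=> s.
      have K1 := key_ineq v_nonneg v_mono v_sub (ALG_mono A s u.+2 r) (A_card (prefix s l)) Hku.
      have K2 : alpha * v (OPT :&: prefix s l) <= v (A (prefix s l)).
      { apply: A_approx. exact: subsetIr. apply: leq_trans OPT_card. apply: subset_leq_card. exact: subsetIl. }
      set Z := \big[Rplus/0]_(j in A (prefix s l)) v (j |: ALG A s u.+2 r) in K1 *. clearbody Z.
      lra. }
    have := @Rsum_le _ predT _ _ (fun s _ => H1 s).
    rewrite !Rsum_split !Rsum_distr.
    rewrite /SO /S2 /S3.
    set T1 := \big[Rplus/0]_(s | predT s) v (OPT :&: prefix s l).
    set T2 := \big[Rplus/0]_(s | predT s) v (ALG A s u.+2 r.+1).
    set T3 := \big[Rplus/0]_(s | predT s) v (ALG A s u.+2 r).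
    move=> H. apply: Rle_ge. exact: H. }
  have HO : SO >= INR #|{perm 'I_n}| * INR l / INR n * v OPT.
  { rewrite /SO. by apply: opt_bound. }
  rewrite /aa !Eperm_sum -/S1 -/S2 -/S3.
  clearbody S1 S2 S3 SO.
  have Hkl : INR k <= INR l by apply: le_INR; apply/leP.
  have Ha : 0 <= alpha by lra.
  set N := INR #|{perm 'I_n}| in HNN HO *. clearbody N.
  have E : / INR l * (alpha * (INR l / INR n) * v OPT + (INR l - INR k) * (S2 / N) + (INR k - 1) * (S3 / N))
    = / (INR l * N) * (alpha * (N * INR l / INR n * v OPT) + (INR l - INR k) * S2 + (INR k - 1) * S3).
  { field. lra. }
  rewrite E. apply: Rle_ge.
  have HaO : alpha * (N * INR l / INR n * v OPT) <= alpha * SO.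
  { apply: Rmult_le_compat_l => //. lra. }
  apply: Rle_trans (_ : / (INR l * N) * (INR l * S1) <= _).
  - apply: Rmult_le_compat_l. left; apply: Rinv_0_lt_compat; nra. lra.
  - right. field. lra.
Qed.
End Rec.

Lemma fact_eq i : INR (Factorial.fact i) = INR (i`!).
Proof.
  congr INR. elim: i => [|i IH] //. rewrite factS -IH. by [].
Qed.

Lemma ee_big (K L : R) m :
  \big[Rplus/0]_(0 <= i < m.+1) (K ^ i / INR (i`!) * L ^ i) = ee K L m.
Proof.
  elim: m => [|m IH].
  - rewrite big_nat1 /=. field.
  - rewrite big_nat_recr //= IH. rewrite -fact_eq. by [].
Qed.

Lemma big_PP (K L : R) r :
  \big[Rplus/0]_(0 <= r' < r) \big[Rplus/0]_(0 <= i < r'.+1) (K ^ i / INR (i`!) * L ^ i) = PP K L r.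
Proof.
  elim: r => [|r IH].
  - by rewrite big_nil.
  - rewrite big_nat_recr //= IH ee_big. by [].
Qed.

Lemma ee_zero K m : ee K 0 m = 1.
Proof.
  elim: m => [|m IH] //. rewrite [ee K 0 m.+1]/= IH. ring.
Qed.

Lemma PP_zero K r : PP K 0 r = INR r.
Proof.
  elim: r => [|r IH] //. rewrite [PP K 0 r.+1]/= IH ee_zero S_INR. by [].
Qed.

Lemma Gf_zero kk K h x : Gf kk K h 0 x = 0.
Proof. rewrite /Gf /Qf /=. rewrite /Rdiv. ring. Qed.

Lemma Gf_one kk K h r : 1 <= K -> 0 < h -> Gf kk K h r 1 <= 0.
Proof.
  move=> HK Hh. rewrite /Gf /Qf ln_1 Ropp_0 pow1 PP_zero.
  have H1 : 0 <= 3 * INR kk ^ 2 * INR r * h / K.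
  { apply: Rmult_le_pos; last by left; apply: Rinv_0_lt_compat; lra.
    apply: Rmult_le_pos; last lra. apply: Rmult_le_pos; last by apply: pos_INR.
    apply: Rmult_le_pos; first lra. apply: pow_le; apply: pos_INR. }
  have E : INR r * 1 / K - 1 / K * (1 * INR r) = 0 by field; lra.
  lra.
Qed.

Theorem mainTheorem4 (n k : nat) (v : {set 'I_n} -> R)
  (A : {set 'I_n} -> {set 'I_n}) (alpha : R) (OPT : {set 'I_n})
  (v_nonneg : forall S, 0 <= v S)
  (v_mono : monotone v)
  (v_sub : submodular v)
  (k_ge2 : (2 <= k)%N)
  (OPT_card : (#|OPT| <= k)%N)
  (OPT_max : forall S : {set 'I_n}, (#|S| <= k)%N -> v S <= v OPT)
  (alpha_pos : 0 < alpha) (alpha_le1 : alpha <= 1)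
  (A_sub : forall L, A L \subset L)
  (A_card : forall L, (#|A L| <= k)%N)
  (A_approx : forall L T : {set 'I_n}, T \subset L -> (#|T| <= k)%N ->
                alpha * v T <= v (A L)) :
  forall l r : nat, (1 <= l <= n)%N -> (k * k + k <= l)%N -> (r <= k)%N ->
  Eperm (fun sigma => v (ALG A sigma l r)) >=
  (INR r * INR l / ((INR k - 1) * INR n)
   - 1 / (INR k - 1) * (INR l / INR n) ^ k *
     \big[Rplus/0]_(0 <= r' < r) \big[Rplus/0]_(0 <= i < r'.+1)
        ((INR k - 1) ^ i / INR (i`!) * (ln (INR n / INR l)) ^ i)
   - 3 * INR k ^ 2 * INR r / ((INR k - 1) * INR n)) * alpha * v OPT.
Proof.
  move=> l r /andP [Hl1 Hln] Hkl Hrk.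
  have Hk2 : 2 <= INR k by apply: (le_INR 2); apply/leP.
  set K := INR k - 1.
  have HK1 : 1 <= K by rewrite /K; lra.
  have Hn0 : (0 < n)%N by lia.
  have Hn : 0 < INR n by apply: lt_0_INR; apply/ltP.
  set h := 1 / INR n.
  have Hh : 0 < h by rewrite /h; apply: Rdiv_lt_0_compat; lra.
  set V := alpha * v OPT.
  have HV : 0 <= V by apply: Rmult_le_pos; [lra | apply: v_nonneg].
  have claim : forall d l', (l' + d = n)%N -> (k * k + k <= l')%N -> forall r', (r' <= k)%N ->
     aa v A l' r' >= Gf k K h r' (INR l' / INR n) * V.
  { elim=> [|d IH] l' Hd Hkl' r' Hr'.
    - rewrite addn0 in Hd; subst l'.
      have -> : INR n / INR n = 1 by field; lra.
      have := @Gf_one k K h r' HK1 Hh. have := aa_ge0 A v_nonneg n r'.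
      rewrite -/h. nra.
    - have Hl'n : (l' < n)%N by lia.
      have IH1 := IH l'.+1 ltac:(lia) ltac:(lia).
      case: r' Hr' => [|r'] Hr'.
      + rewrite Gf_zero Rmult_0_l. apply: Rle_ge. exact: aa_ge0 A v_nonneg _ _.
      + have Hu : (l'.-1 < n)%N by lia.
        set u := Ordinal Hu.
        have Hul : u.+1 = l' by rewrite /= ; lia.
        have Hku : (k <= u.+1)%N by rewrite Hul; lia.
        have Hrec := @recur n k v A alpha OPT v_nonneg v_mono v_sub OPT_card alpha_pos A_sub A_card A_approx u r' Hku.
        rewrite Hul in Hrec.
        have IA1 := IH1 r'.+1 Hr'.
        have IA0 := IH1 r' ltac:(lia).
        set x := INR l' / INR n.
        have Hl'0 : 0 < INR l' by apply: lt_0_INR; apply/ltP; lia.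
        have Hx : 0 < x by rewrite /x; apply: Rdiv_lt_0_compat.
        have Hy : INR l'.+1 / INR n = x + h by rewrite /x /h S_INR; field; lra.
        rewrite Hy in IA1 IA0.
        have Hxh : x + h <= 1.
        { rewrite -Hy. apply: (Rmult_le_reg_r (INR n)) => //. field_simplify; [|lra].
          apply: le_INR; apply/leP; lia. }
        have Hk2n : (2 <= k)%coq_nat by apply/leP.
        have Hrk' : (r'.+1 <= k)%coq_nat by apply/leP.
        have Hstep := step_ineq k K h Hk2n erefl Hh r' x Hrk' Hx Hxh.
        set G1 := Gf k K h r'.+1 (x + h) in IA1 Hstep.
        set G0 := Gf k K h r' (x + h) in IA0 Hstep.
        set A1 := aa v A l'.+1 r'.+1 in Hrec IA1.
        set A0 := aa v A l'.+1 r' in Hrec IA0.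
        have Hc1 : 0 <= INR l' - INR k.
        { have : INR k <= INR l' by apply: le_INR; apply/leP; lia. lra. }
        have Hc0 : 0 <= INR k - 1 by lra.
        have Hmid : / INR l' * (alpha * (INR l' / INR n) * v OPT + (INR l' - INR k) * A1 + (INR k - 1) * A0)
          >= / INR l' * (alpha * (INR l' / INR n) * v OPT + (INR l' - INR k) * (G1 * V) + (INR k - 1) * (G0 * V)).
        { apply: Rle_ge. apply: Rmult_le_compat_l. left; apply: Rinv_0_lt_compat; lra.
          apply: Rplus_le_compat. apply: Rplus_le_compat_l. apply: Rmult_le_compat_l; lra.
          apply: Rmult_le_compat_l; lra. }
        have E : / INR l' * (alpha * (INR l' / INR n) * v OPT + (INR l' - INR k) * (G1 * V) + (INR k - 1) * (G0 * V))
          = V * (h + (1 - INR k * h / x) * G1 + (K * h / x) * G0).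
        { rewrite /V /x /h /K. field. lra. }
        rewrite E in Hmid.
        have : V * Gf k K h r'.+1 x <= V * (h + (1 - INR k * h / x) * G1 + (K * h / x) * G0).
        { apply: Rmult_le_compat_l => //. }
        move: Hrec Hmid. clearbody A1 A0 G1 G0.
        rewrite -/x. move=> *. nra. }
  have := claim (n - l)%N l ltac:(lia) Hkl r Hrk.
  rewrite /aa. move=> H.
  have -> : (INR r * INR l / ((INR k - 1) * INR n)
   - 1 / (INR k - 1) * (INR l / INR n) ^ k *
     \big[Rplus/0]_(0 <= r' < r) \big[Rplus/0]_(0 <= i < r'.+1)
        ((INR k - 1) ^ i / INR (i`!) * (ln (INR n / INR l)) ^ i)
   - 3 * INR k ^ 2 * INR r / ((INR k - 1) * INR n)) * alpha * v OPT
   = Gf k K h r (INR l / INR n) * V.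
  { rewrite big_PP.
    have Hl0 : 0 < INR l by apply: lt_0_INR; apply/ltP; lia.
    have -> : ln (INR n / INR l) = - ln (INR l / INR n).
    { rewrite -ln_Rinv; last by apply: Rdiv_lt_0_compat.
      congr ln. field. lra. }
    rewrite /Gf /Qf /V /h -/K. field. lra. }
  exact: H.
Qed.
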